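(* Let $p$ be a prime, $d \ge 0$ an integer, $G=(\mathbb{Z}/p\mathbb{Z})^d$, and let $t, r$ be integers with $0 \leq t \leq d$, $p^t < r \leq p^{t+1}$ (and $r \le p^d$, so that $\rho_G^-(r)$ is defined). Then \[\rho_G^-(r) \leq p^t \min\left\{ 2\left\lceil\frac{r}{p^t}\right\rceil - 1,\ p\right\}.\]
   Context: For a finite abelian group $(G,+)$ of order $N$ and subsets $A, B \subseteq G$, write $A - B = \{a - b \mid a \in A, b \in B\}$. For $1 \le r \le N$ define $\rho^-_G(r) = \min \{|A - A| \mid A \subseteq G, |A| = r\}$. *)

(* Defs.v *)
From HB Require Import structures.
From mathcomp Require Import all_boot all_order all_algebra.
Set Implicit Arguments. Unset Strict Implicit. Unset Printing Implicit Defensive.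
Import GRing.Theory.

Definition diffset (G : finZmodType) (A : {set G}) : {set G} :=
  [set (a - b)%R | a in A, b in A].

(* rho^-_G(r) = min { |A - A| : A subset of G, |A| = r }.
   (For r with no subset of size r, i.e. r > |G|, the value defaults to #|G|;
    the theorem only uses 1 <= r <= |G|.) *)
Definition rho_minus (G : finZmodType) (r : nat) : nat :=
  \big[minn/#|G|]_(A : {set G} | #|A| == r) #|diffset A|.

Definition ceil_div (m n : nat) : nat := (m + n.-1) %/ n.

(* Main.v *)
Require Import Defs.
From mathcomp Require Import all_boot all_order all_algebra.
From mathcomp Require Import zify.

Lemma bigmin_leq_my (I : finType) (P : pred I) (F : I -> nat) x j :
  P j -> \big[minn/x]_(i | P i) F i <= F j.
Proof.
move=> Pj; move: (mem_index_enum j); elim: (index_enum I) => [//|i s IH].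
rewrite inE big_cons => /orP[/eqP<-|/IH H]; first by rewrite Pj geq_minl.
by case: ifP => _ //; rewrite geq_min H orbT.
Qed.

Lemma arith_facts (p t r : nat) : 1 < p -> p ^ t < r -> r <= p ^ t.+1 ->
  r <= ceil_div r (p ^ t) * p ^ t /\ ceil_div r (p ^ t) <= p.
Proof.
move=> p1 h1 h2; rewrite /ceil_div.
have q0 : 0 < p ^ t by rewrite expn_gt0; lia.
set q := p ^ t in q0 h1 h2 *.
have := divn_eq (r + q.-1) q; have := ltn_pmod (r + q.-1) q0.
rewrite expnS mulnC -/q in h2.
set k := (r + q.-1) %/ q; set m := (r + q.-1) %% q => hm he.
split; first by nia.
case: (leqP k p) => // hk. nia.
Qed.

Import GRing.Theory.

Theorem mainTheorem5 (p d t r : nat) :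
  prime p -> t <= d -> p ^ t < r -> r <= p ^ t.+1 -> r <= p ^ d ->
  rho_minus [the finZmodType of 'rV['F_p]_d] r
    <= p ^ t * minn (2 * ceil_div r (p ^ t)).-1 p.
Proof.
move=> pp htd h1 h2 h3.
have p1 : 1 < p by apply: prime_gt1.
have [hr hk] := @arith_facts p t r p1 h1 h2.
set k := ceil_div r (p ^ t) in hr hk *.
have ltd : t < d.
  rewrite ltnNge; apply/negP => hdt.
  have : p ^ d <= p ^ t by rewrite leq_exp2l.
  lia.
pose tI : 'I_d := Ordinal ltd.
pose g (x : {ffun 'I_t -> 'F_p} * 'I_k) : 'rV['F_p]_d :=
  (\row_(i < d) (if i == tI then ((x.2 : nat)%:R : 'F_p)
                else odflt 0 (omap x.1 (insub (i : nat)))))%R.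
pose phi (x : 'rV['F_p]_d) : {ffun 'I_t -> 'F_p} * 'F_p :=
  ([ffun i => x ord0 (widen_ord htd i)], x ord0 tI).
pose D := [set x : 'rV['F_p]_d | [forall i : 'I_d, (t < i) ==> (x ord0 i == 0%R)]].
pose S := [set ((m : nat)%:R - (k.-1)%:R : 'F_p)%R | m : 'I_(2 * k).-1].
pose B := [set g x | x in [set: {ffun 'I_t -> 'F_p} * 'I_k]].
pose A := [set x in take r (enum B)].
have ginj : injective g.
  move=> [x1 j1] [x2 j2] /matrixP E.
  have E2 := E ord0 tI; rewrite !mxE eqxx /= in E2.
  have ej : j1 = j2.
    apply: val_inj; move: (congr1 val E2); rewrite /= !val_Fp_nat //.
    by rewrite !modn_small //; apply: leq_trans hk; apply: ltn_ord.
  subst j2; congr (_, _); apply/ffunP => i.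
  have := E ord0 (widen_ord htd i); rewrite !mxE /=.
  have -> : (widen_ord htd i == tI) = false.
    by rewrite -val_eqE /= ltn_eqF.
  by rewrite /= valK.
have cardB : #|B| = p ^ t * k.
  rewrite card_imset // cardsT card_prod card_ffun card_Fp // card_ord.
  by rewrite card_ord.
have cardA : #|A| = r.
  rewrite cardsE.
  have /card_uniqP -> : uniq (take r (enum B)) by rewrite take_uniq // enum_uniq.
  by rewrite size_takel // -cardE cardB mulnC.
have AB : A \subset B.
  by apply/subsetP => x; rewrite inE => /mem_take; rewrite mem_enum.
have phiinj : {in D &, injective phi}.
  move=> x y; rewrite !inE => /forallP hx /forallP hy [/ffunP E1 E2].
  apply/matrixP => a b; rewrite (ord1 a).
  case: (ltngtP b t) => hb.
  - have := E1 (Ordinal hb); rewrite !ffunE.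
    by have -> : widen_ord htd (Ordinal hb) = b by apply: val_inj.
  - by move: (hx b) (hy b); rewrite hb /= => /eqP -> /eqP ->.
  - by have -> : b = tI by apply: val_inj.
have gD : forall x1 x2, (g x1 - g x2)%R \in D.
  move=> x1 x2; rewrite inE; apply/forallP => i; apply/implyP => hi.
  rewrite !mxE.
  have -> : (i == tI) = false by rewrite -val_eqE /= gtn_eqF.
  have hN : (i < t) = false by rewrite ltnNge ltnW.
  rewrite !(@insubF _ (fun n => n < t) 'I_t (nat_of_ord i) hN).
  by apply/eqP; rewrite [odflt _ _]/= subr0.
have gS : forall x1 x2, phi (g x1 - g x2)%R \in setX [set: {ffun 'I_t -> 'F_p}] S.
  move=> [x1 j1] [x2 j2]; rewrite inE /=; apply/andP; split; first by rewrite inE.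
  rewrite !mxE eqxx /=.
  have hlt : j1 + k.-1 - j2 < (2 * k).-1.
    have := ltn_ord j1; have := ltn_ord j2; lia.
  apply/imsetP; exists (Ordinal hlt) => //=.
  rewrite natrB; last by have := ltn_ord j2; lia.
  by rewrite natrD addrAC addrK.
have dD : diffset A \subset D.
  apply/subsetP => z /imset2P [a b ha hb ->].
  move: (subsetP AB a ha) (subsetP AB b hb) => /imsetP [x1 _ ->] /imsetP [x2 _ ->].
  exact: gD.
have dS : [set phi x | x in diffset A] \subset setX [set: {ffun 'I_t -> 'F_p}] S.
  apply/subsetP => w /imsetP [z /imset2P [a b ha hb ->] ->].
  move: (subsetP AB a ha) (subsetP AB b hb) => /imsetP [x1 _ ->] /imsetP [x2 _ ->].
  exact: gS.
have cardS : #|S| <= minn (2 * k).-1 p.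
  rewrite leq_min; apply/andP; split.
    by apply: leq_trans (leq_imset_card _ _) _; rewrite card_ord.
  by apply: leq_trans (max_card _) _; rewrite card_Fp.
apply: leq_trans (@bigmin_leq_my _ _ _ _ A _) _; first by rewrite cardA.
rewrite -(card_in_imset (f := phi)); last first.
  by move=> x y hx hy; apply: phiinj; apply: (subsetP dD).
apply: leq_trans (subset_leq_card dS) _.
rewrite cardsX cardsT card_ffun card_Fp // card_ord.
by rewrite leq_mul2l cardS orbT.
Qed.
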